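(* Let $1\le r\le n$, let $(z^1,\dots,z^n)$ be any random vector in $[r]^n$, and let $p,q\in[0,1]$. Let $\mathcal G$ be the random graph on $[n]$ in which, conditionally on $(z^1,\dots,z^n)$, each edge $\{i,j\}$ ($i\ne j$) is present independently with probability $p\,\mathbb 1\{z^i=z^j\}+q\,\mathbb 1\{z^i\ne z^j\}$. Then $\mathcal B(\mathcal G)\le n\log r$.
   Context: A random graph $\mathcal G$ on $[n]$ is identified with the random vector of edge indicators $(e^{ij})_{1\le i<j\le n}\in\{0,1\}^{\binom n2}$. For a random vector $x=(x^1,\dots,x^m)$ on a finite product set, the dual total correlation is $\mathcal B(x)=\mathcal H(x)-\sum_{i=1}^m\mathcal H(x^i\mid x^{-i})$, with $\mathcal H$ Shannon entropy and $x^{-i}$ the vector with coordinate $i$ removed. *)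

(* Defs.v *)
From HB Require Import structures.
From mathcomp Require Import all_boot all_order all_algebra.
From mathcomp Require Import reals exp.
Set Implicit Arguments. Unset Strict Implicit. Unset Printing Implicit Defensive.
Import Order.TTheory GRing.Theory Num.Theory.
Local Open Scope ring_scope.

Section Entropy.
Variable R : realType.

Definition xlnx (x : R) : R := if x == 0 then 0 else x * ln x.

Definition pr (Omega T : finType) (P : Omega -> R) (X : Omega -> T) (t : T) : R :=
  \sum_(w : Omega | X w == t) P w.

Definition entropy (Omega T : finType) (P : Omega -> R) (X : Omega -> T) : R :=
  - \sum_(t : T) xlnx (pr P X t).

Definition condEntropy (Omega T U : finType) (P : Omega -> R)
  (X : Omega -> T) (Y : Omega -> U) : R :=
  entropy P (fun w => (X w, Y w)) - entropy P Y.

Definition dropc (I V : finType) (i : I) (x : {ffun I -> V}) :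
  {ffun {j : I | j != i} -> V} := [ffun j => x (val j)].

Definition dtc (I V : finType) (P : {ffun I -> V} -> R) : R :=
  entropy P id - \sum_(i : I) condEntropy P (fun x => x i) (dropc i).

End Entropy.

Definition edge (n : nat) : finType := {e : 'I_n * 'I_n | (e.1 < e.2)%N}.

(* Law of the graph G (edge-indicator vector) given the law mu of the
   label vector z in [r]^n: conditionally on z, the edges are independent,
   edge {i,j} present with probability p if z_i = z_j and q otherwise. *)
Definition sbm_law (R : realType) (n r : nat) (mu : {ffun 'I_n -> 'I_r} -> R)
  (p q : R) (g : {ffun edge n -> bool}) : R :=
  \sum_(z : {ffun 'I_n -> 'I_r}) mu z *
    \prod_(e : edge n)
      (let pe := if z (val e).1 == z (val e).2 then p else q in
       if g e then pe else 1 - pe).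

(* Main.v *)
Require Import Defs.
From HB Require Import structures.
From mathcomp Require Import all_boot all_order all_algebra.
From mathcomp Require Import reals exp.
From mathcomp Require Import ring lra.
Set Implicit Arguments. Unset Strict Implicit. Unset Printing Implicit Defensive.
Import Order.TTheory GRing.Theory Num.Theory.
Local Open Scope ring_scope.

Section Gen.
Variable R : realType.
Variables (Omega T : finType).

Lemma xlnxE (x : R) : xlnx x = x * ln x.
Proof. by rewrite /xlnx; case: eqP => [->|]; rewrite ?mul0r. Qed.

Lemma partition_sum (X : Omega -> T) (H : Omega -> R) :
  \sum_t \sum_(w | X w == t) H w = \sum_w H w.
Proof.
rewrite [RHS](partition_big X predT) //.
Qed.

Lemma fiber_sum (P : Omega -> R) (X : Omega -> T) (G : T -> R) :
  \sum_w P w * G (X w) = \sum_t pr P X t * G t.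
Proof.
rewrite -(partition_sum X); apply: eq_bigr => t _.
rewrite /pr mulr_suml; apply: eq_bigr => w /eqP -> //.
Qed.

Lemma entropyE (P : Omega -> R) (X : Omega -> T) :
  entropy P X = - \sum_w P w * ln (pr P X (X w)).
Proof.
rewrite /entropy (fiber_sum P X (fun t => ln (pr P X t))).
by congr (- _); apply: eq_bigr => t _; rewrite xlnxE.
Qed.
End Gen.
Lemma ln_le_sub1 (R : realType) (x : R) : 0 < x -> ln x <= x - 1.
Proof. move=> x0; have h : -1 < x - 1 by lra. by have := le_ln1Dx h; rewrite addrC subrK. Qed.

Section Main.
Variable R : realType.
Variables (n r : nat) (mu : {ffun 'I_n -> 'I_r} -> R).
Hypothesis mu_ge0 : forall z, 0 <= mu z.
Hypothesis mu_sum1 : \sum_z mu z = 1.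
Variables (p q : R).
Hypotheses (hp0 : 0 <= p) (hp1 : p <= 1) (hq0 : 0 <= q) (hq1 : q <= 1).

Definition pe (z : {ffun 'I_n -> 'I_r}) (e : edge n) : R :=
  if z (val e).1 == z (val e).2 then p else q.
Definition F z e (b : bool) : R := if b then pe z e else 1 - pe z e.
Definition J (g : {ffun edge n -> bool}) z : R := mu z * \prod_e F z e (g e).
Definition P := sbm_law mu p q.
Definition D e g := pr P (dropc e) (dropc e g).

Lemma PE g : P g = \sum_z J g z.
Proof. by []. Qed.

Lemma pe01 z e : 0 <= pe z e <= 1.
Proof. by rewrite /pe; case: ifP => _; apply/andP. Qed.

Lemma F_ge0 z e b : 0 <= F z e b.
Proof. have /andP[h1 h2] := pe01 z e; rewrite /F; case: b; lra. Qed.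

Lemma F_sum1 z e : \sum_b F z e b = 1.
Proof. rewrite big_bool /F /=; lra. Qed.

Lemma J_ge0 g z : 0 <= J g z.
Proof. by rewrite /J mulr_ge0 // prodr_ge0 // => e _; exact: F_ge0. Qed.

Lemma marg z : \sum_g J g z = mu z.
Proof.
rewrite /J -mulr_sumr.
rewrite -(bigA_distr_bigA (fun e b => F z e b)).
by rewrite big1 ?mulr1 // => e _; rewrite F_sum1.
Qed.

Lemma P_ge0 g : 0 <= P g.
Proof. by rewrite PE sumr_ge0 // => z _; exact: J_ge0. Qed.

Lemma P_sum1 : \sum_g P g = 1.
Proof.
under eq_bigr do rewrite PE.
by rewrite exchange_big /=; under eq_bigr do rewrite marg.
Qed.

Lemma J_le_P g z : J g z <= P g.
Proof.
rewrite PE (bigD1 z) //= lerDl sumr_ge0 // => z' _; exact: J_ge0.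
Qed.

Lemma P_le_D e g : P g <= D e g.
Proof.
rewrite /D /pr (bigD1 g) //= lerDl sumr_ge0 // => g' _; exact: P_ge0.
Qed.




Lemma ln_prod (I : finType) (G : I -> R) :
  (forall i, 0 < G i) -> ln (\prod_i G i) = \sum_i ln (G i).
Proof.
move=> Gp.
have: 0 < \prod_i G i /\ ln (\prod_i G i) = \sum_i ln (G i).
  apply: (big_rec2 (fun a b => 0 < a /\ ln a = b)) => [|i a b _ [a0 <-]].
    by rewrite ln1.
  by split; [rewrite mulr_gt0 | rewrite lnM // posrE].
by case.
Qed.

Lemma lnJ g z : J g z * ln (J g z) = J g z * ln (mu z) + \sum_e J g z * ln (F z e (g e)).
Proof.
have [->|Jn0] := eqVneq (J g z) 0; first by rewrite !mul0r big1 ?addr0 // => e _; rewrite mul0r.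
have Jp : 0 < J g z by rewrite lt_neqAle eq_sym Jn0 J_ge0.
move: (Jn0); rewrite /J mulf_eq0 negb_or => /andP[mun0 /prodf_neq0 Fn0].
have mup : 0 < mu z by rewrite lt_neqAle eq_sym mun0 mu_ge0.
have Fp e : 0 < F z e (g e) by rewrite lt_neqAle eq_sym F_ge0 andbT; apply: Fn0.
rewrite -mulr_sumr -mulrDr lnM ?posrE ?prodr_gt0 // ln_prod //.
Qed.


Definition K e (g : {ffun edge n -> bool}) z := mu z * \prod_(e' | e' != e) F z e' (g e').

Lemma J_split e g z : J g z = F z e (g e) * K e g z.
Proof. by rewrite /J /K (bigD1 e) //= mulrCA. Qed.

Lemma K_ge0 e g z : 0 <= K e g z.
Proof. by rewrite /K mulr_ge0 // prodr_ge0 // => e' _; exact: F_ge0. Qed.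

Lemma K_drop e g z :
  K e g z = mu z * \prod_(x : {j : edge n | j != e}) F z (val x) (dropc e g x).
Proof.
rewrite /K; congr (_ * _).
rewrite (reindex_omap (val : {j : edge n | j != e} -> edge n) insub); last first.
  by move=> i ie; rewrite insubT.
apply: eq_big => [[i ie]|[i ie] _] /=.
    by rewrite insubT ?ie /=; apply/eqP.
by rewrite ffunE.
Qed.

Lemma key e z : \sum_g K e g z * P g / D e g <= mu z.
Proof.
pose c (h : {ffun {j : edge n | j != e} -> bool}) :=
  mu z * \prod_(x : {j : edge n | j != e}) F z (val x) (h x).
have -> : \sum_g K e g z * P g / D e g =
    \sum_g P g * (fun h => c h / pr P (dropc e) h) (dropc e g).
  by apply: eq_bigr => g _ /=; rewrite K_drop /D /c; ring.
rewrite (fiber_sum P (dropc e) (fun h => c h / pr P (dropc e) h)).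
apply: (@le_trans _ _ (\sum_h c h)).
  apply: ler_sum => h _.
  have c0 : 0 <= c h by rewrite mulr_ge0 // prodr_ge0 // => x _; exact: F_ge0.
  have [->|pn0] := eqVneq (pr P (dropc e) h) 0; first by rewrite mul0r.
  by rewrite mulrC -mulrA mulVf // mulr1.
rewrite /c -mulr_sumr.
rewrite -(bigA_distr_bigA (fun x b => F z (val x) b)).
by rewrite big1 ?mulr1 // => x _; rewrite F_sum1.
Qed.

Lemma B_le e :
  \sum_g \sum_z J g z * (ln (P g) - ln (D e g) - ln (F z e (g e))) <= 0.
Proof.
apply: (@le_trans _ _ (\sum_g \sum_z (K e g z * P g / D e g - J g z))).
  apply: ler_sum => g _; apply: ler_sum => z _.
  have [->|Jn0] := eqVneq (J g z) 0.
    have D0 : 0 <= D e g := le_trans (P_ge0 g) (P_le_D e g).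
    rewrite mul0r subr0; apply: mulr_ge0; [apply: mulr_ge0; [exact: K_ge0|exact: P_ge0]|by rewrite invr_ge0].
  have Jp : 0 < J g z by rewrite lt_neqAle eq_sym Jn0 J_ge0.
  have Pp : 0 < P g by apply: lt_le_trans Jp (J_le_P g z).
  have Dp : 0 < D e g by apply: lt_le_trans Pp (P_le_D e g).
  move: (Jn0); rewrite (J_split e) mulf_eq0 negb_or => /andP[Fn0 Kn0].
  have Fp : 0 < F z e (g e) by rewrite lt_neqAle eq_sym Fn0 F_ge0.
  have -> : ln (P g) - ln (D e g) - ln (F z e (g e)) = ln (P g / (D e g * F z e (g e))).
    by rewrite ln_div ?posrE ?mulr_gt0 // lnM ?posrE // opprD addrA.
  apply: (@le_trans _ _ (J g z * (P g / (D e g * F z e (g e)) - 1))).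
    rewrite -(J_split e); apply: (ler_wpM2l (J_ge0 g z)); apply: ln_le_sub1; rewrite divr_gt0 ?mulr_gt0 //.
  rewrite mulrBr mulr1 (J_split e) le_eqVlt; apply/orP; left; apply/eqP.
  field; apply/andP; split; apply/lt0r_neq0 => //.
rewrite exchange_big /=.
have -> : \sum_z \sum_g (K e g z * P g / D e g - J g z) =
          \sum_z (\sum_g K e g z * P g / D e g - mu z).
  by apply: eq_bigr => z _; rewrite sumrB marg.
rewrite sumrB mu_sum1 subr_le0.
by rewrite -mu_sum1; apply: ler_sum => z _; exact: key.
Qed.


Lemma A_le : \sum_g \sum_z J g z * (ln (J g z) - ln (P g)) <= 0.
Proof.
rewrite sumr_le0 // => g _; rewrite sumr_le0 // => z _.
have [->|Jn0] := eqVneq (J g z) 0; first by rewrite mul0r.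
have Jp : 0 < J g z by rewrite lt_neqAle eq_sym Jn0 J_ge0.
have Pp : 0 < P g by apply: lt_le_trans Jp (J_le_P g z).
rewrite mulr_ge0_le0 ?J_ge0 // subr_le0 ler_ln ?posrE //; exact: J_le_P.
Qed.

Lemma pair_eq e (g g' : {ffun edge n -> bool}) :
  ((g' e, dropc e g') == (g e, dropc e g)) = (g' == g).
Proof.
apply/idP/eqP => [/eqP [h1 h2]|-> //].
apply/ffunP => x; have [->//|xe] := eqVneq x e.
by move/ffunP: h2 => /(_ (exist _ x xe)); rewrite !ffunE.
Qed.

Lemma dtcE : dtc P = - \sum_g P g * ln (P g)
   - \sum_e (- \sum_g P g * ln (P g) + \sum_g P g * ln (D e g)).
Proof.
rewrite /dtc entropyE.
have -> : \sum_w P w * ln (pr P id (id w)) = \sum_g P g * ln (P g).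
  by apply: eq_bigr => g _; rewrite /pr big_pred1_eq.
congr (_ - _); apply: eq_bigr => e _.
rewrite /condEntropy !entropyE opprK; congr (- _ + _).
apply: eq_bigr => g _; rewrite /pr (big_pred1 g) // => g'.
by rewrite /= pair_eq.
Qed.


Lemma Hmu_le : (0 < r)%N -> - \sum_z mu z * ln (mu z) <= n%:R * ln (r%:R : R).
Proof.
move=> r0.
set c := n%:R * ln (r%:R : R).
set u := ((r%:R : R) ^+ n)^-1.
have rp : 0 < (r%:R : R) by rewrite ltr0n.
have rnp : 0 < (r%:R : R) ^+ n by rewrite exprn_gt0.
have up : 0 < u by rewrite invr_gt0.
have lnu : ln u = - c by rewrite /u lnV ?posrE // lnXn // /c mulr_natl.
apply: (@le_trans _ _ (\sum_z (u - mu z + mu z * c))).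
  rewrite -sumrN; apply: ler_sum => z _.
  have [->|mn0] := eqVneq (mu z) 0; first by rewrite !mul0r; lra.
  have mp : 0 < mu z by rewrite lt_neqAle eq_sym mn0 mu_ge0.
  have h := ln_le_sub1 (divr_gt0 up mp).
  rewrite ln_div ?posrE // lnu in h.
  have h2 := ler_wpM2l (ltW mp) h.
  have e1 : mu z * (u / mu z - 1) = u - mu z by field; apply: lt0r_neq0.
  rewrite e1 in h2; lra.
rewrite big_split sumrB /= -mulr_suml mu_sum1 mul1r sumr_const card_ffun !card_ord.
rewrite -mulr_natr natrX /u mulVf ?subrr ?add0r //; exact: lt0r_neq0.
Qed.


Lemma sum3 (I1 I2 : finType) (a b c : I1 -> I2 -> R) :
  \sum_i \sum_j (a i j + b i j - c i j) =
  \sum_i \sum_j a i j + \sum_i \sum_j b i j - \sum_i \sum_j c i j.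
Proof.
rewrite -big_split -sumrB; apply: eq_bigr => i _ /=.
by rewrite -big_split -sumrB.
Qed.

Lemma pt g z :
  J g z * (- ln (P g) - \sum_e (- ln (P g) + ln (D e g))) =
  J g z * (ln (J g z) - ln (P g))
  + \sum_e J g z * (ln (P g) - ln (D e g) - ln (F z e (g e)))
  - J g z * ln (mu z).
Proof.
have H := lnJ g z.
have S1 : \sum_e J g z * (ln (P g) - ln (D e g) - ln (F z e (g e))) =
   J g z * \sum_e (ln (P g) - ln (D e g)) - \sum_e J g z * ln (F z e (g e)).
  by rewrite mulr_sumr -sumrB; apply: eq_bigr => e _; ring.
have S2 : \sum_e (- ln (P g) + ln (D e g)) = - \sum_e (ln (P g) - ln (D e g)).
  by rewrite -sumrN; apply: eq_bigr => e _; ring.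
rewrite S1 S2 [J g z * (ln (J g z) - _)]mulrBr H; ring.
Qed.

Lemma claim : dtc P =
  \sum_g \sum_z J g z * (ln (J g z) - ln (P g))
  + \sum_e \sum_g \sum_z J g z * (ln (P g) - ln (D e g) - ln (F z e (g e)))
  - \sum_z mu z * ln (mu z).
Proof.
have M : \sum_z mu z * ln (mu z) = \sum_g \sum_z J g z * ln (mu z).
  rewrite exchange_big /=; apply: eq_bigr => z _.
  by rewrite -mulr_suml marg.
have E : \sum_e \sum_g \sum_z J g z * (ln (P g) - ln (D e g) - ln (F z e (g e))) =
    \sum_g \sum_z \sum_e J g z * (ln (P g) - ln (D e g) - ln (F z e (g e))).
  rewrite exchange_big /=; apply: eq_bigr => g _.
  by rewrite exchange_big.
rewrite M E -sum3.
under [RHS]eq_bigr do under eq_bigr do rewrite -pt.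
rewrite dtcE.
have X : \sum_e (- \sum_g P g * ln (P g) + \sum_g P g * ln (D e g)) =
    \sum_g \sum_e (- (P g * ln (P g)) + P g * ln (D e g)).
  rewrite exchange_big /=; apply: eq_bigr => e _.
  by rewrite -sumrN -big_split.
rewrite X -sumrN -sumrB; apply: eq_bigr => g _.
rewrite -mulr_suml -PE.
have Y : \sum_e (- (P g * ln (P g)) + P g * ln (D e g)) =
    P g * \sum_e (- ln (P g) + ln (D e g)).
  by rewrite mulr_sumr; apply: eq_bigr => e _; ring.
rewrite Y; ring.
Qed.

Lemma main_bound : (0 < r)%N -> dtc P <= n%:R * ln (r%:R : R).
Proof.
move=> r0; rewrite claim.
have hA := A_le.
have hB : \sum_e \sum_g \sum_z J g z * (ln (P g) - ln (D e g) - ln (F z e (g e))) <= 0.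
  by apply: sumr_le0 => e _; exact: B_le.
have hM := Hmu_le r0.
lra.
Qed.

End Main.

Theorem proposition4 (R : realType) (n r : nat) (hr1 : (1 <= r)%N) (hrn : (r <= n)%N)
  (mu : {ffun 'I_n -> 'I_r} -> R)
  (mu_ge0 : forall z, 0 <= mu z) (mu_sum1 : \sum_z mu z = 1)
  (p q : R) (hp0 : 0 <= p) (hp1 : p <= 1) (hq0 : 0 <= q) (hq1 : q <= 1) :
  dtc (sbm_law mu p q) <= n%:R * ln (r%:R : R).
Proof. exact: (main_bound mu_ge0 mu_sum1 hp0 hp1 hq0 hq1 hr1). Qed.
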